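(* Let $\kappa>-1$ and let $ds^2_\kappa$ be the Jensen metric on the Stiefel variety $V(n,r)$, i.e. the Riemannian metric whose kinetic energy function on $T^*V(n,r)$ is $$T_\kappa(X,P)=\tfrac12\operatorname{tr}(P^TP)-\left(\tfrac12+\kappa\right)\operatorname{tr}((X^TP)^2).$$ Then the Legendre transformation $TV(n,r)\to T^*V(n,r)$ determined by $ds^2_\kappa$ and its inverse are given by $$P=\dot X-\frac{1+2\kappa}{2+2\kappa}\,XX^T\dot X,\qquad \dot X=P-(1+2\kappa)\,XP^TX,$$ respectively, where $(X,\dot X)$ satisfies $X^TX=\mathbf I_r$, $X^T\dot X+\dot X^TX=0$ and $(X,P)$ satisfies $X^TX=\mathbf I_r$, $X^TP+P^TX=0$.
   Context: $V(n,r)=\{X\in M_{n,r}(\mathbb R): X^TX=\mathbf I_r\}$ is the Stiefel variety. Its tangent bundle is realized as pairs $(X,\dot X)$ of $n\times r$ matrices with $X^TX=\mathbf I_r$, $X^T\dot X+\dot X^TX=0$; its cotangent bundle is realized as pairs $(X,P)$ of $n\times r$ matrices with $X^TX=\mathbf I_r$, $X^TP+P^TX=0$, covectors being paired with tangent vectors by $\operatorname{tr}(P^T\dot X)$ (the restriction of the ambient Euclidean structure of $M_{n,r}(\mathbb R)$). Equivalently, $T_\kappa=\frac12\langle\Phi,\Phi\rangle+\frac12\kappa\langle\Psi,\Psi\rangle$ with $\Phi=PX^T-XP^T$, $\Psi=X^TP-P^TX$ and $\langle\eta_1,\eta_2\rangle=-\frac12\operatorname{tr}(\eta_1\eta_2)$.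 *)

(* Defs.v *)
From mathcomp Require Import all_boot all_order all_algebra.
Set Implicit Arguments. Unset Strict Implicit. Unset Printing Implicit Defensive.
Import Order.TTheory GRing.Theory Num.Theory.
Local Open Scope ring_scope.

Section Stiefel.
Variables (R : realFieldType) (n r : nat).

Definition stiefel (X : 'M[R]_(n, r)) : Prop := X^T *m X = 1%:M.

Definition tangent_at (X Xd : 'M[R]_(n, r)) : Prop :=
  X^T *m Xd + Xd^T *m X = 0.

Definition cotangent_at (X P : 'M[R]_(n, r)) : Prop :=
  X^T *m P + P^T *m X = 0.

Definition pairing (P Xd : 'M[R]_(n, r)) : R := \tr (P^T *m Xd).

Definition T_kappa (k : R) (X P : 'M[R]_(n, r)) : R :=
  2^-1 * \tr (P^T *m P) - (2^-1 + k) * \tr ((X^T *m P) *m (X^T *m P)).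

(* The co-metric: the symmetric bilinear form on covectors at X obtained by
   polarization of the quadratic form 2 T_kappa(X, .); equivalently the
   differential of T_kappa(X, .) at P in the direction Q. *)
Definition cometric (k : R) (X P Q : 'M[R]_(n, r)) : R :=
  T_kappa k X (P + Q) - T_kappa k X P - T_kappa k X Q.

(* (X, Xdot) and (X, P) correspond under the Legendre transformation of
   ds^2_kappa: P is a covector at X and Xdot is the fibre derivative of the
   kinetic energy at P, i.e. <Q, Xdot> = dT_kappa(X,.)_P (Q) for all
   covectors Q at X. *)
Definition legendre (k : R) (X Xd P : 'M[R]_(n, r)) : Prop :=
  cotangent_at X P /\
  forall Q, cotangent_at X Q -> pairing Q Xd = cometric k X P Q.

End Stiefel.

(* Main.v *)
Require Import Defs.
From mathcomp Require Import all_boot all_order all_algebra.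
From mathcomp Require Import ring.
Import Order.TTheory GRing.Theory Num.Theory.
Local Open Scope ring_scope.

Lemma trTT_eq0 (R : realFieldType) (m n : nat) (D : 'M[R]_(m, n)) :
  \tr (D^T *m D) = 0 -> D = 0.
Proof.
move=> H.
have H' : \sum_(j < n) (\sum_(i < m) D i j ^+ 2) = 0.
  rewrite -[RHS]H /mxtrace; apply: eq_bigr => j _; rewrite mxE.
  by apply: eq_bigr => i _; rewrite mxE expr2.
apply/matrixP => i j; rewrite mxE.
have Hj : \sum_(i < m) D i j ^+ 2 = 0.
  by apply: (psumr_eq0P _ H') => // j' _; apply: sumr_ge0 => i' _; apply: sqr_ge0.
have Hij : D i j ^+ 2 = 0.
  by apply: (psumr_eq0P _ Hj) => // i' _; apply: sqr_ge0.
by move/eqP: Hij; rewrite sqrf_eq0 => /eqP.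
Qed.

Lemma cometricE (R : realFieldType) (n r : nat) (k : R) (X P Q : 'M[R]_(n, r)) :
  cometric k X P Q = \tr (P^T *m Q) - (1 + 2 * k) * \tr (X^T *m P *m (X^T *m Q)).
Proof.
rewrite /cometric /T_kappa.
rewrite !linearD /= !mulmxDl !mxtraceD.
have e1 : \tr (Q^T *m P) = \tr (P^T *m Q) by rewrite -mxtrace_tr trmx_mul trmxK.
have e2 : \tr (X^T *m Q *m (X^T *m P)) = \tr (X^T *m P *m (X^T *m Q)) by rewrite mxtrace_mulC.
rewrite e1 e2.
set a := \tr (P^T *m Q); set b := \tr (X^T *m P *m (X^T *m Q)).
set c := \tr (P^T *m P); set d := \tr (Q^T *m Q).
set e := \tr (X^T *m P *m (X^T *m P)); set f := \tr (X^T *m Q *m (X^T *m Q)).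
by field.
Qed.

Lemma tanE (R : realFieldType) (n r : nat) (X M : 'M[R]_(n, r)) :
  (X^T *m M + M^T *m X = 0) <-> (X^T *m M + (X^T *m M)^T = 0).
Proof. by rewrite trmx_mul trmxK. Qed.

Lemma trcross (R : realFieldType) (n r : nat) (X P Q : 'M[R]_(n, r)) :
  cotangent_at X P ->
  \tr (X^T *m P *m (X^T *m Q)) = - \tr (Q^T *m (X *m (X^T *m P))).
Proof.
rewrite /cotangent_at => hP.
have hPt : P^T *m X = - (X^T *m P) by apply/eqP; rewrite -addr_eq0 addrC hP.
rewrite -mxtrace_tr !trmx_mul !trmxK hPt mulmxN linearN /=.
by rewrite !mulmxA.
Qed.

Lemma legE (R : realFieldType) (n r : nat) (k : R) (X Xd P : 'M[R]_(n, r)) :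
  cotangent_at X P ->
  (legendre k X Xd P <-> forall Q, cotangent_at X Q ->
     \tr (Q^T *m (Xd - (P + (1 + 2 * k) *: (X *m (X^T *m P))))) = 0).
Proof.
move=> hP.
have key : forall Q, pairing Q Xd - cometric k X P Q =
    \tr (Q^T *m (Xd - (P + (1 + 2 * k) *: (X *m (X^T *m P))))).
  move=> Q; rewrite cometricE trcross // /pairing.
  rewrite mulmxBr mulmxDr -scalemxAr linearB linearD /= mxtraceZ.
  have e1 : \tr (Q^T *m P) = \tr (P^T *m Q) by rewrite -mxtrace_tr trmx_mul trmxK.
  rewrite e1; ring.
split.
  case=> _ H Q hQ; by rewrite -key H // subrr.
move=> H; split=> // Q hQ; apply/eqP; rewrite -subr_eq0 key H //.
Qed.

Lemma XtV (R : realFieldType) (n r : nat) (c : R) (X P : 'M[R]_(n, r)) :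
  X^T *m X = 1%:M ->
  X^T *m (P + c *: (X *m (X^T *m P))) = (1 + c) *: (X^T *m P).
Proof.
move=> hX; rewrite mulmxDr -scalemxAr !mulmxA hX mul1mx.
by rewrite scalerDl scale1r.
Qed.

Lemma antisymZ (R : realFieldType) (r : nat) (s : R) (B : 'M[R]_r) :
  B + B^T = 0 -> s *: B + (s *: B)^T = 0.
Proof. by move=> h; rewrite linearZ /= -scalerDr h scaler0. Qed.

Lemma part2 (R : realFieldType) (n r : nat) (k : R) (X : 'M[R]_(n, r)) :
  X^T *m X = 1%:M ->
  forall P, cotangent_at X P ->
     forall Xd, (tangent_at X Xd /\ legendre k X Xd P) <->
       Xd = P + (1 + 2 * k) *: (X *m (X^T *m P)).
Proof.
move=> hX P hP Xd.
have hV : tangent_at X (P + (1 + 2 * k) *: (X *m (X^T *m P))).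
  apply/tanE; rewrite XtV //; apply: antisymZ; exact/tanE.
split.
  case=> hXd /(@legE _ _ _ k _ _ _ hP) H.
  apply/eqP; rewrite -subr_eq0; apply/eqP; apply: trTT_eq0; apply: H.
  move: hXd hV => /tanE hXd /tanE hV; apply/tanE.
  move: hXd hV; rewrite mulmxBr linearB /= => hXd hV.
  by rewrite addrACA hXd -opprD hV oppr0 addr0.
move=> ->; split=> //; apply/(@legE _ _ _ k _ _ _ hP) => Q _.
by rewrite subrr mulmx0 mxtrace0.
Qed.

Theorem lemma1 (R : realFieldType) (n r : nat) (k : R) (X : 'M[R]_(n, r)) :
  -1 < k -> stiefel X ->
  (forall Xd, tangent_at X Xd ->
     forall P, legendre k X Xd P <->
       P = Xd - ((1 + 2 * k) / (2 + 2 * k)) *: (X *m X^T *m Xd)) /\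
  (forall P, cotangent_at X P ->
     forall Xd, (tangent_at X Xd /\ legendre k X Xd P) <->
       Xd = P - (1 + 2 * k) *: (X *m P^T *m X)).
Proof.
rewrite /stiefel => hk hX.
have hd : 2 + 2 * k != 0.
  by rewrite gt_eqF // (_ : 2 + 2 * k = 2 * (k + 1)); [rewrite mulr_gt0 // -ltrBlDr sub0r | ring].
have VE : forall P, cotangent_at X P ->
    P - (1 + 2 * k) *: (X *m P^T *m X) = P + (1 + 2 * k) *: (X *m (X^T *m P)).
  move=> P hP.
  have hPt : P^T *m X = - (X^T *m P) by apply/eqP; rewrite -addr_eq0 addrC hP.
  by rewrite -mulmxA hPt mulmxN scalerN opprK.
split; last first.
  by move=> P hP Xd; rewrite VE //; apply: part2.
move=> Xd hXd P; split.
  move=> hL; have hP := hL.1.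
  have := (@part2 _ _ _ k X hX P hP Xd).1 (conj hXd hL) => eXd.
  have eB : X^T *m P = (2 + 2 * k)^-1 *: (X^T *m Xd).
    rewrite eXd XtV // scalerA (_ : (2 + 2 * k)^-1 * (1 + (1 + 2 * k)) = 1) ?scale1r //.
    by field.
  rewrite {1}eXd -mulmxA eB -scalemxAr scalerA addrK.
  done.
move=> eP.
have eB : X^T *m P = (2 + 2 * k)^-1 *: (X^T *m Xd).
  rewrite eP mulmxBr -scalemxAr !mulmxA hX mul1mx -{1}(scale1r (X^T *m Xd)) -scalerBl.
  by congr (_ *: _); field.
have hP : cotangent_at X P by apply/tanE; rewrite eB; apply: antisymZ; exact/tanE.
suff eXd : Xd = P + (1 + 2 * k) *: (X *m (X^T *m P)).
  exact: ((@part2 _ _ _ k X hX P hP Xd).2 eXd).2.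
rewrite eB -scalemxAr scalerA mulmxA {1}eP.
by rewrite mulrC subrK.
Qed.
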